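(* The price of anarchy of CC-MAR is unbounded: there exists an instance having a Nash equilibrium with positive total cost while some strategy profile has total cost $0$ (so the ratio between the worst Nash equilibrium cost and the optimal cost is not bounded by any constant).
   Context: A mixed graph $G=(V,E,A)$ has undirected edges $E\subseteq\binom{V}{2}$ with positive integer weights $w_e$ and arcs $A\subseteq V\times V$. A path is a sequence of pairwise distinct vertices in which consecutive vertices are joined by an edge or by an arc in the forward direction. A CC-MAR instance is $(G,\mathcal{T})$ with $\mathcal{T}$ a multiset of $k$ pairs $(s_i,t_i)$, each connected by some path. A strategy profile $\mathcal{P}=\{P_1,\dots,P_k\}$ consists of $s_i$-$t_i$ paths. For $\{u,v\}\in E$, $x_{uv}$ is the number of paths traversing it from $u$ to $v$. Agent $i$'s cost is $\sum w_{uv}x_{vu}$ over edges $\{u,v\}$ traversed by $P_i$ from $u$ to $v$; total cost is $\mathrm{cost}(\mathcal{P})=\sum_{\{u,v\}\in E}w_{uv}x_{uv}x_{vu}$. A Nash equilibrium is a profile where no agent can strictly lower its own cost by unilaterally changing its path. The price of anarchy is the supremum over instances of the ratio of the maximum total cost of a Nash equilibrium to the minimum total cost of any profile. *)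

(* Defs.v *)
From mathcomp Require Import all_boot all_order.
Set Implicit Arguments. Unset Strict Implicit. Unset Printing Implicit Defensive.

Section CCMAR.
Variable n : nat.
Notation V := 'I_n.

(* A mixed graph G = (V, E, A) with edge weights:
   [edge : rel V] is the (symmetric, irreflexive) undirected edge relation,
   [arc : rel V] the arc relation ((u,v) is an arc iff arc u v),
   [w : V -> V -> nat] the edge weights (meaningful on edges only). *)
Record mixed_graph := MixedGraph {
  edge : rel V;
  arc : rel V;
  w : V -> V -> nat
}.

Variable G : mixed_graph.

(* We additionally
   require that no pair of vertices is joined both by an edge and an arc,
   so that each step of a path unambiguously traverses an edge or an arc. *)
Definition wf_graph : Prop :=
  [/\ forall u v, edge G u v = edge G v u,
      forall u, ~~ edge G u u,
      forall u v, edge G u v -> 0 < w G u v,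
      forall u v, edge G u v -> w G u v = w G v u &
      forall u v, edge G u v -> ~~ arc G u v].

Definition steps (p : seq V) : seq (V * V) := zip p (behead p).

Definition step_ok (uv : V * V) : bool := edge G uv.1 uv.2 || arc G uv.1 uv.2.

Definition is_path (s t : V) (p : seq V) : bool :=
  [&& p != [::], head s p == s, last s p == t, uniq p & all step_ok (steps p)].

Variable k : nat.
Definition profile (T : 'I_k -> V * V) (P : 'I_k -> seq V) : Prop :=
  forall i, is_path (T i).1 (T i).2 (P i).

Definition traverses (p : seq V) (u v : V) : bool :=
  edge G u v && ((u, v) \in steps p).

Definition xflow (P : 'I_k -> seq V) (u v : V) : nat :=
  #|[set i : 'I_k | traverses (P i) u v]|.

Definition agent_cost (P : 'I_k -> seq V) (i : 'I_k) : nat :=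
  \sum_(uv <- steps (P i) | edge G uv.1 uv.2) w G uv.1 uv.2 * xflow P uv.2 uv.1.

(* total cost: sum over unordered edges {u,v} (enumerated with u < v) *)
Definition total_cost (P : 'I_k -> seq V) : nat :=
  \sum_(u : V) \sum_(v : V | (u < v)%N && edge G u v)
     w G u v * xflow P u v * xflow P v u.

Definition deviate (P : 'I_k -> seq V) (i : 'I_k) (Q : seq V) : 'I_k -> seq V :=
  fun j => if j == i then Q else P j.

Definition nash_eq (T : 'I_k -> V * V) (P : 'I_k -> seq V) : Prop :=
  profile T P /\
  forall i Q, is_path (T i).1 (T i).2 Q ->
    agent_cost P i <= agent_cost (deviate P i Q) i.

End CCMAR.

(* Main.v *)
Require Import Defs.
From mathcomp Require Import all_boot all_order.

Lemma sum_list (T : finType) (s : seq T) (F : T -> nat) :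
  uniq s -> (forall x, x \in s) -> \sum_(x : T) F x = sumn (map F s).
Proof.
move=> us alls; rewrite sumnE big_map; apply: perm_big; apply: uniq_perm => //.
  exact: index_enum_uniq.
by move=> x; rewrite mem_index_enum alls.
Qed.

Definition v4 (m : nat) (H : m < 4) : 'I_4 := Ordinal H.
Definition a0 := @v4 0 isT. Definition a1 := @v4 1 isT. Definition a2 := @v4 2 isT. Definition a3 := @v4 3 isT.
Definition o4 : seq 'I_4 := [:: a0; a1; a2; a3].
Definition o3 : seq 'I_3 := [:: @Ordinal 3 0 isT; @Ordinal 3 1 isT; @Ordinal 3 2 isT].

Lemma o4_all x : x \in o4.
Proof. case: x => m Hm; rewrite !inE -!val_eqE /= //; by case: m Hm => [|[|[|[|]]]]. Qed.
Lemma o3_all x : x \in o3.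
Proof. case: x => m Hm; rewrite !inE -!val_eqE /= //; by case: m Hm => [|[|[|]]]. Qed.
Lemma o4_uniq : uniq o4. Proof. vm_compute. reflexivity. Qed.
Lemma o3_uniq : uniq o3. Proof. vm_compute. reflexivity. Qed.

Definition ed (u v : 'I_4) : bool := ((val u, val v) \in [:: (0,1);(1,0);(1,2);(2,1)]).
Definition ar (u v : 'I_4) : bool := ((val u, val v) \in [:: (0,2);(1,3);(3,2)]).
Definition G0 : mixed_graph 4 := @MixedGraph 4 ed ar (fun _ _ => 1).
Definition T0 (i : 'I_3) : 'I_4 * 'I_4 :=
  match val i with 0 => (a0, a1) | 1 => (a1, a0) | _ => (a1, a2) end.
Definition P0 (i : 'I_3) : seq 'I_4 :=
  match val i with 0 => [:: a0; a1] | 1 => [:: a1; a0] | _ => [:: a1; a2] end.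
Definition P1 (i : 'I_3) : seq 'I_4 :=
  match val i with 0 => [:: a0; a2; a1] | 1 => [:: a1; a0]
  | _ => [:: a1; a3; a2] end.

Definition xflowC (P : 'I_3 -> seq 'I_4) (u v : 'I_4) : nat :=
  sumn (map (fun i => if traverses G0 (P i) u v then 1 else 0) o3).

Lemma xflowE P u v : xflow G0 P u v = xflowC P u v.
Proof.
by rewrite /xflow -sum1dep_card big_mkcond /= (@sum_list _ _ _ o3_uniq o3_all).
Qed.

Definition costC (P : 'I_3 -> seq 'I_4) (i : 'I_3) : nat :=
  sumn [seq w G0 uv.1 uv.2 * xflowC P uv.2 uv.1 | uv <- steps (P i) & edge G0 uv.1 uv.2].

Lemma costE P i : agent_cost G0 P i = costC P i.
Proof.
rewrite /agent_cost /costC sumnE big_map big_filter.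
by apply: eq_bigr => uv _; rewrite xflowE.
Qed.

Definition totalC (P : 'I_3 -> seq 'I_4) : nat :=
  sumn (map (fun u : 'I_4 => sumn (map (fun v : 'I_4 =>
     if (u < v)%N && edge G0 u v then w G0 u v * xflowC P u v * xflowC P v u else 0) o4)) o4).

Lemma totalE P : total_cost G0 P = totalC P.
Proof.
rewrite /total_cost (@sum_list _ _ _ o4_uniq o4_all); congr sumn; apply: eq_map => u.
rewrite big_mkcond (@sum_list _ _ _ o4_uniq o4_all); congr sumn; apply: eq_map => v.
by rewrite !xflowE.
Qed.

Definition chkQ (Q : seq 'I_4) : bool :=
  all (fun i => is_path G0 (T0 i).1 (T0 i).2 Q ==> (costC P0 i <= costC (deviate P0 i Q) i)) o3.

Definition allQ : bool :=
  [&& chkQ [::], all (fun a => chkQ [:: a]) o4,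
      all (fun a => all (fun b => chkQ [:: a; b]) o4) o4,
      all (fun a => all (fun b => all (fun c => chkQ [:: a; b; c]) o4) o4) o4 &
      all (fun a => all (fun b => all (fun c => all (fun d => chkQ [:: a; b; c; d]) o4) o4) o4) o4].

Lemma allQ_true : allQ. Proof. vm_compute. reflexivity. Qed.

Lemma chk_all Q : uniq Q -> chkQ Q.
Proof.
move=> uQ; have := allQ_true; case/and5P=> H0 H1 H2 H3 H4.
have hs : size Q <= 4 by by rewrite -(card_uniqP uQ); apply: leq_trans (max_card _) _; rewrite card_ord.
case: Q uQ hs => [|a [|b [|c [|d [|e Q]]]]] //= _ _.
- by move/allP: H1; apply; apply: o4_all.
- by move/allP: H2 => /(_ a (o4_all a)) /allP; apply; apply: o4_all.
- by move/allP: H3 => /(_ a (o4_all a)) /allP /(_ b (o4_all b)) /allP; apply; apply: o4_all.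
- move/allP: H4 => /(_ a (o4_all a)) /allP /(_ b (o4_all b)) /allP /(_ c (o4_all c)) /allP.
  by apply; apply: o4_all.
Qed.

Definition wfb : bool :=
  all (fun u => all (fun v =>
    [&& edge G0 u v == edge G0 v u, ~~ edge G0 u u & edge G0 u v ==> ~~ Defs.arc G0 u v]) o4) o4.
Lemma wfb_true : wfb. Proof. vm_compute. reflexivity. Qed.

Lemma prof_b : all (fun i => is_path G0 (T0 i).1 (T0 i).2 (P0 i) && is_path G0 (T0 i).1 (T0 i).2 (P1 i)) o3.
Proof. vm_compute. reflexivity. Qed.

Theorem mainTheorem3 :
  exists (n : nat) (G : mixed_graph n) (k : nat) (T : 'I_k -> 'I_n * 'I_n)
         (P Popt : 'I_k -> seq 'I_n),
    [/\ wf_graph G,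
        nash_eq G T P,
        0 < total_cost G P,
        profile G T Popt &
        total_cost G Popt = 0].
Proof.
exists 4, G0, 3, T0, P0, P1.
have wf u v : [&& edge G0 u v == edge G0 v u, ~~ edge G0 u u & edge G0 u v ==> ~~ Defs.arc G0 u v].
  by move/allP: wfb_true => /(_ u (o4_all u)) /allP /(_ v (o4_all v)).
have pr i : is_path G0 (T0 i).1 (T0 i).2 (P0 i) && is_path G0 (T0 i).1 (T0 i).2 (P1 i).
  by move/allP: prof_b; apply; apply: o3_all.
split.
- split=> [u v|u|u v _|u v _|u v].
  + by case/and3P: (wf u v) => /eqP.
  + by case/and3P: (wf u u).
  + by [].
  + by [].
  + by case/and3P: (wf u v) => _ _ /implyP.
- split; first by move=> i; case/andP: (pr i).
  move=> i Q HQ; rewrite !costE.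
  have HQ' := HQ; case/and5P: HQ' => _ _ _ uQ _.
  move/allP: (@chk_all _ uQ) => /(_ i (o3_all i)).
  by rewrite HQ.
- by rewrite totalE; vm_compute.
- by move=> i; case/andP: (pr i).
- by rewrite totalE; vm_compute.
Qed.
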